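(* Let $k\geq 3$ be an odd integer and let $n\geq 2$. Then the integer $k$-matching preclusion number of the complete graph $K_n$ is $$mp^{k}(K_n)=\begin{cases} n-2, & n\in\{3,5\},\\ n-1, & \text{otherwise}.\end{cases}$$
   Context: All graphs are finite, simple and undirected; $\Gamma(v)$ is the set of edges incident with $v$. For a positive integer $k$, an integer $k$-matching of $G$ is a function $h:E(G)\to\{0,1,\dots,k\}$ with $\sum_{e\in\Gamma(v)}h(e)\leq k$ for all $v\in V(G)$. It is perfect if $\sum_{e\in\Gamma(v)}h(e)=k$ for every vertex $v$, and almost perfect if there is exactly one vertex $v'$ with $\sum_{e\in\Gamma(v')}h(e)=k-1$ and $\sum_{e\in\Gamma(v)}h(e)=k$ for all other vertices $v$. An edge set $F\subseteq E(G)$ is an integer $k$-matching preclusion set if $G-F$ has neither a perfect integer $k$-matching nor an almost perfect integer $k$-matching; $mp^{k}(G)$ is the minimum size of such a set. *)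

(* Defs.v *)
From mathcomp Require Import all_boot.
Set Implicit Arguments. Unset Strict Implicit. Unset Printing Implicit Defensive.

Record sgraph (V : finType) := SGraph {
  adj : rel V;
  adj_sym : symmetric adj;
  adj_irr : irreflexive adj }.

Definition is_edge (V : finType) (G : sgraph V) (e : {set V}) : bool :=
  [exists x, exists y, adj G x y && (e == [set x; y])].

Definition edges_del (V : finType) (G : sgraph V) (F : {set {set V}}) : {set {set V}} :=
  [set e | is_edge G e & e \notin F].

Definition hdeg (V : finType) (E : {set {set V}}) (h : {set V} -> nat) (v : V) : nat :=
  \sum_(e in E | v \in e) h e.

(* integer k-matching of the graph with edge set E: h : E -> {0..k}
   (encoded as a function on vertex sets that vanishes outside E). *)
Definition int_kmatching (V : finType) (E : {set {set V}}) (k : nat)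
    (h : {set V} -> nat) : Prop :=
  (forall e, e \notin E -> h e = 0) /\
  (forall e, h e <= k) /\
  (forall v, hdeg E h v <= k).

Definition perfect_int_kmatching (V : finType) (E : {set {set V}}) (k : nat)
    (h : {set V} -> nat) : Prop :=
  int_kmatching E k h /\ forall v, hdeg E h v = k.

Definition almost_perfect_int_kmatching (V : finType) (E : {set {set V}}) (k : nat)
    (h : {set V} -> nat) : Prop :=
  int_kmatching E k h /\
  exists v', hdeg E h v' = k.-1 /\ forall v, v != v' -> hdeg E h v = k.

Definition int_kmp_set (V : finType) (G : sgraph V) (k : nat) (F : {set {set V}}) : Prop :=
  (forall e, e \in F -> is_edge G e) /\
  ~ (exists h, perfect_int_kmatching (edges_del G F) k h) /\
  ~ (exists h, almost_perfect_int_kmatching (edges_del G F) k h).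

Definition mpk_eq (V : finType) (G : sgraph V) (k m : nat) : Prop :=
  (exists F, int_kmp_set G k F /\ #|F| = m) /\
  (forall F, int_kmp_set G k F -> m <= #|F|).

Lemma complete_sym n : symmetric (fun x y : 'I_n => x != y).
Proof. by move=> x y; rewrite eq_sym. Qed.
Lemma complete_irr n : irreflexive (fun x y : 'I_n => x != y).
Proof. by move=> x; rewrite eqxx. Qed.
Definition complete_graph (n : nat) : sgraph 'I_n :=
  SGraph (@complete_sym n) (@complete_irr n).

(* Main.v *)
Require Import Defs.
From mathcomp Require Import all_boot.
From mathcomp Require Import zify.
Set Implicit Arguments. Unset Strict Implicit. Unset Printing Implicit Defensive.

Lemma cards3 (T : finType) (a b c : T) : a != b -> a != c -> b != c -> #|[set a; b; c]| = 3.
Proof. move=> ab ac bc. rewrite setUC cardsU1 cards2 ab !inE eq_sym (negbTE ac) eq_sym (negbTE bc). done. Qed.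

Ltac purge := repeat match goal with H : _ |- _ => first [clearbody H | clear H] end.
Ltac plia := purge; lia.

Section Main.
Variable n : nat.
Variable F : {set {set 'I_n}}.
Hypothesis hF : forall e, e \in F -> exists x y, x != y /\ e = [set x; y].

Definition FW (W : {set 'I_n}) := [set e in F | e \subset W].

Lemma T2 (W : {set 'I_n}) a : a \in W -> #|FW W| + 2 <= #|W| ->
  exists v, [/\ v \in W, v != a & [set a; v] \notin F].
Proof.
move=> aW hc.
case: (pickP [pred v | (v \in W) && (v != a) && ([set a; v] \notin F)]).
  by move=> v /= /andP [/andP [h1 h2] h3]; exists v.
move=> /= hn.
have sub : (fun v => [set a; v]) @: (W :\ a) \subset FW W.
  apply/subsetP => e /imsetP [v]; rewrite !inE => /andP [va vW] ->.
  have := hn v; rewrite /= vW va /= => /negbFE ->.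
  by apply/subsetP => x; rewrite !inE => /orP [] /eqP ->.
have inj : {in W :\ a &, injective (fun v => [set a; v])}.
  move=> v w; rewrite !inE => /andP [va _] /andP [wa _] eq.
  have : v \in [set a; w] by rewrite -eq set22.
  by rewrite !inE (negbTE va) /= => /eqP.
have := subset_leq_card sub; rewrite (card_in_imset inj).
move: hc; rewrite (cardsD1 a W) aW /= add1n => h1 h2; exfalso; move: h1 h2; set c1 := #|FW W|; set c2 := #|W :\ a|; plia.
Qed.


Lemma REM (W : {set 'I_n}) u v (D : {set {set 'I_n}}) :
  D \subset FW W -> (forall e, e \in D -> (u \in e) || (v \in e)) ->
  #|FW (W :\ u :\ v)| + #|D| <= #|FW W|.
Proof.
move=> sD hD.
have s1 : FW (W :\ u :\ v) \subset FW W :\: D.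
  apply/subsetP => e; rewrite !inE => /andP [eF sW].
  have sW' : e \subset W.
    apply/subsetP => x /(subsetP sW); rewrite !inE; by case/and3P.
  rewrite eF sW' andbT andbT.
  apply/negP => /hD /orP [] h; have := subsetP sW _ h; rewrite !inE eqxx //= andbF //.
have := subset_leq_card s1.
have := cardsID D (FW W); rewrite (setIidPr sD).
set c1 := #|FW W|; set c2 := #|FW W :\: D|; set c3 := #|D|; set c4 := #|FW (W :\ u :\ v)|.
plia.
Qed.

Lemma PLfin (W : {set 'I_n}) u v (D : {set {set 'I_n}}) :
  u \in W -> v \in W -> u != v -> [set u; v] \notin F ->
  D \subset FW W -> (forall e, e \in D -> (u \in e) || (v \in e)) ->
  minn 2 #|FW W| <= #|D| ->
  exists u v, [/\ u \in W, v \in W, u != v, [set u; v] \notin F &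
     #|FW (W :\ u :\ v)| + minn 2 #|FW W| <= #|FW W|].
Proof.
move=> uW vW uv uvF sD hD hm; exists u, v; split => //.
have := REM sD hD; move: hm.
set c1 := #|FW W|; set c3 := #|D|; set c4 := #|FW (W :\ u :\ v)|.
plia.
Qed.

Lemma FWP (W : {set 'I_n}) e : (e \in FW W) = (e \in F) && (e \subset W).
Proof. by rewrite inE. Qed.

Lemma PL (W : {set 'I_n}) : #|FW W| + 2 <= #|W| ->
  exists u v, [/\ u \in W, v \in W, u != v, [set u; v] \notin F &
     #|FW (W :\ u :\ v)| + minn 2 #|FW W| <= #|FW W|].
Proof.
move=> hc.
have [f0|fn0] := eqVneq #|FW W| 0.
  have : 0 < #|W| by move: hc; set c := #|W|; plia.
  rewrite card_gt0 => /set0Pn [a aW].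
  have [v [vW va vF]] := T2 aW hc.
  apply: (PLfin (u := a) (v := v) (D := set0)) => //; first by rewrite eq_sym.
  - exact: sub0set.
  - by move=> e; rewrite inE.
  - by rewrite f0.
have : 0 < #|FW W| by move: fn0; set c := #|FW W|; plia.
rewrite card_gt0 => /set0Pn [e1 e1W].
have := e1W; rewrite FWP => /andP [e1F e1s].
have [a [b [ab e1E]]] := hF e1F.
have aW : a \in W by apply: (subsetP e1s); rewrite e1E set21.
have ae1 : a \in e1 by rewrite e1E set21.
have [f1|fn1] := eqVneq #|FW W| 1.
  have [v [vW va vF]] := T2 aW hc.
  apply: (PLfin (u := a) (v := v) (D := [set e1])) => //; first by rewrite eq_sym.
  - by rewrite sub1set.
  - by move=> e; rewrite inE => /eqP ->; rewrite ae1.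
  - by rewrite f1 cards1.
have : 0 < #|FW W :\ e1|.
  move: fn1 fn0; rewrite (cardsD1 e1 (FW W)) e1W /=.
  set c := #|FW W :\ e1|; plia.
rewrite card_gt0 => /set0Pn [e2]; rewrite in_setD1 => /andP [e21 e2W].
have := e2W; rewrite FWP => /andP [e2F e2s].
have [c [d [cd e2E]]] := hF e2F.
have cW : c \in W by apply: (subsetP e2s); rewrite e2E set21.
have dW : d \in W by apply: (subsetP e2s); rewrite e2E set22.
have c2 : #|[set e1; e2]| = 2 by rewrite cards2 eq_sym e21.
have s12 : [set e1; e2] \subset FW W.
  by apply/subsetP => e /set2P [] ->.
have m2 : minn 2 #|FW W| <= 2 by apply: geq_minl.
case ce1: (c \in e1).
  have [v [vW va vF]] := T2 cW hc.
  apply: (PLfin (u := c) (v := v) (D := [set e1; e2])) => //; first by rewrite eq_sym.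
  - by move=> e /set2P [] ->; rewrite ?ce1 // e2E set21.
  - by rewrite c2.
case de1: (d \in e1).
  have [v [vW va vF]] := T2 dW hc.
  apply: (PLfin (u := d) (v := v) (D := [set e1; e2])) => //; first by rewrite eq_sym.
  - by move=> e /set2P [] ->; rewrite ?de1 // e2E set22.
  - by rewrite c2.
have ac : a != c by apply: contraFN ce1 => /eqP <-.
case acF: ([set a; c] \in F).
  have e3W : [set a; c] \in FW W.
    by rewrite FWP acF; apply/subsetP => x; rewrite !inE => /orP [] /eqP ->.
  have e31 : e1 != [set a; c].
    by apply: contraFN ce1 => /eqP ->; rewrite set22.
  have [v [vW va vF]] := T2 aW hc.
  apply: (PLfin (u := a) (v := v) (D := [set e1; [set a; c]])) => //; first by rewrite eq_sym.
  - by apply/subsetP => e /set2P [] ->.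
  - by move=> e /set2P [] ->; rewrite ?ae1 // set21.
  - by rewrite cards2 e31.
apply: (PLfin (u := a) (v := c) (D := [set e1; e2])) => //.
- by rewrite acF.
- by move=> e /set2P [] ->; rewrite ?ae1 // e2E set21 orbT.
- by rewrite c2.
Qed.


Lemma PLgen (W : {set 'I_n}) u v (D : {set {set 'I_n}}) m :
  u \in W -> v \in W -> u != v -> [set u; v] \notin F ->
  D \subset FW W -> (forall e, e \in D -> (u \in e) || (v \in e)) ->
  m <= #|D| ->
  exists u v, [/\ u \in W, v \in W, u != v, [set u; v] \notin F &
     #|FW (W :\ u :\ v)| + m <= #|FW W|].
Proof.
move=> uW vW uv uvF sD hD hm; exists u, v; split => //.
have := REM sD hD; move: hm.
set c1 := #|FW W|; set c3 := #|D|; set c4 := #|FW (W :\ u :\ v)|.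
plia.
Qed.

Lemma card_edge e : e \in F -> #|e| = 2.
Proof. by move/hF => [x [y [xy ->]]]; rewrite cards2 xy. Qed.

Lemma PL7 (W : {set 'I_n}) : #|W| = 7 -> #|FW W| = 5 ->
  exists u v, [/\ u \in W, v \in W, u != v, [set u; v] \notin F &
     #|FW (W :\ u :\ v)| + 3 <= #|FW W|].
Proof.
move=> h7 h5.
have hc : #|FW W| + 2 <= #|W| by rewrite h7 h5.
have [x [e1 [e2 [e1W e2W e12 xe1 xe2]]]] : exists x e1 e2,
    [/\ e1 \in FW W, e2 \in FW W, e1 != e2, x \in e1 & x \in e2].
  case: (boolP [exists e1 in FW W, exists e2 in FW W, (e1 != e2) && (e1 :&: e2 != set0)]).
    move=> /existsP [e1 /andP [e1W /existsP [e2 /andP [e2W /andP [e12 /set0Pn [x]]]]]].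
    by rewrite inE => /andP [? ?]; exists x, e1, e2.
  move=> hn; exfalso.
  have tr : trivIset (FW W).
    apply/trivIsetP => A B hA hB hAB; rewrite -setI_eq0.
    apply: contraNT hn => hI; apply/existsP; exists A; rewrite hA /=.
    by apply/existsP; exists B; rewrite hB hAB.
  move: tr; rewrite /trivIset => /eqP.
  rewrite (eq_bigr (fun=> 2)); last first.
    by move=> B; rewrite FWP => /andP [/card_edge].
  rewrite sum_nat_const h5 => hcov.
  have : #|cover (FW W)| <= #|W|.
    apply: subset_leq_card; apply/subsetP => y /bigcupP [B]; rewrite FWP.
    by move=> /andP [_ /subsetP]; apply.
  by rewrite -hcov h7.
have xW : x \in W by move: e1W; rewrite FWP => /andP [_ /subsetP]; apply.
set Dx := [set e in FW W | x \in e].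
have e1D : e1 \in Dx by rewrite inE e1W.
have e2D : e2 \in Dx by rewrite inE e2W.
have sDx : Dx \subset FW W by apply/subsetP => e; rewrite inE => /andP [].
case: (leqP 3 #|Dx|) => hD.
  have [v [vW va vF]] := T2 xW hc.
  apply: (PLgen (u := x) (v := v) (D := Dx)) => //; first by rewrite eq_sym.
  by move=> e; rewrite inE => /andP [_ ->].
have onlyx : forall e, e \in FW W -> x \in e -> (e == e1) || (e == e2).
  move=> e eW xe; apply: contraLR hD; rewrite negb_or => /andP [n1 n2].
  rewrite -ltnNge ltnS.
  have <- : #|[set e1; e2; e]| = 3 by rewrite cards3 // eq_sym.
  apply: subset_leq_card; apply/subsetP => y /setUP [/set2P [] -> | /set1P ->] //.
  by rewrite inE eW xe.
set U := e1 :|: e2.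
have cUx : #|U :\ x| <= 2.
  rewrite /U setDUl.
  have := leq_of_leqif (leq_card_setU (e1 :\ x) (e2 :\ x)).
  have := cardsD1 x e1; have := cardsD1 x e2.
  rewrite xe1 xe2 (card_edge (e := e1)) ?(card_edge (e := e2)) /= ?add1n.
  - set a1 := #|e1 :\ x|; set a2 := #|e2 :\ x|; set a3 := #|(e1 :\ x) :|: (e2 :\ x)|. plia.
  - by move: e2W; rewrite FWP => /andP [].
  - by move: e1W; rewrite FWP => /andP [].
have sU : [set e in FW W | e \subset U] \subset [set e1; e2; U :\ x].
  apply/subsetP => e; rewrite inE => /andP [eW eU].
  case xe: (x \in e).
    by have := onlyx e eW xe; case/orP => /eqP ->; apply/setUP; left; apply/set2P; [left|right].
  have eUx : e \subset U :\ x.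
    apply/subsetP => y ye; rewrite in_setD1 (subsetP eU) // andbT.
    by apply: contraFN xe => /eqP <-.
  have : e == U :\ x.
    rewrite eqEcard eUx /=; move: eW; rewrite FWP => /andP [/card_edge -> _] //.
  by move/eqP ->; apply/setUP; right; apply/set1P.
have : ~~ (FW W \subset [set e in FW W | e \subset U]).
  apply/negP => /subset_leq_card h1.
  have h2 := subset_leq_card sU.
  have h3 : #|[set e1; e2; U :\ x]| <= 3.
    rewrite setUC; apply: (leq_trans (leq_of_leqif (leq_card_setU _ _))).
    by rewrite cards1 add1n ltnS (leq_trans (leq_of_leqif (leq_card_setU _ _))) // !cards1.
  move: h1 h2 h3; rewrite h5.
  set c1 := #|[set e1; e2; U :\ x]|; set c2 := #|[set e in FW W | e \subset U]|. plia.
case/subsetPn => e eW; rewrite inE eW /= => /subsetPn [v ve vU].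
have ve1 : v \notin e1 by apply: contra vU; rewrite /U inE => ->.
have ve2 : v \notin e2 by apply: contra vU; rewrite /U inE => ->; rewrite orbT.
have vx : v != x by apply: contraNN ve1 => /eqP ->.
have vW : v \in W by move: eW; rewrite FWP => /andP [_ /subsetP]; apply.
have xvF : [set x; v] \notin F.
  apply/negP => xvF.
  have xvW : [set x; v] \in FW W.
    by rewrite FWP xvF; apply/subsetP => y /set2P [] ->.
  have := onlyx _ xvW (set21 _ _); case/orP => /eqP h.
    by move: ve1; rewrite -h set22.
  by move: ve2; rewrite -h set22.
have ee1 : e1 != e by apply: contraNN ve1 => /eqP ->.
have ee2 : e2 != e by apply: contraNN ve2 => /eqP ->.
apply: (PLgen (u := x) (v := v) (D := [set e1; e2; e])) => //.
- by rewrite eq_sym.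
- apply/subsetP => y; rewrite !inE -!orbA.
  by case/or3P => /eqP ->; rewrite -?FWP ?e1W ?e2W ?eW.
- move=> y; rewrite !inE -!orbA.
  by case/or3P => /eqP ->; rewrite ?xe1 ?xe2 ?ve ?orbT.
- by rewrite cards3.
Qed.


Variable k : nat.
Definition E := edges_del (complete_graph n) F.

Lemma memE x y : x != y -> [set x; y] \notin F -> [set x; y] \in E.
Proof.
move=> xy xyF; rewrite /E /edges_del inE xyF andbT.
by apply/existsP; exists x; apply/existsP; exists y; rewrite /= xy eqxx.
Qed.

Definition addw (h : {set 'I_n} -> nat) (a : {set 'I_n}) c :=
  fun e => if e == a then c else h e.

Lemma hdeg_add h a c v : a \in E -> h a = 0 ->
  hdeg E (addw h a c) v = hdeg E h v + (v \in a) * c.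
Proof.
move=> aE ha; rewrite /hdeg.
case va: (v \in a).
  rewrite (bigD1 a) /=; last by rewrite aE va.
  rewrite [in RHS](bigD1 a) /=; last by rewrite aE va.
  rewrite /addw eqxx ha add0n mul1n addnC; congr (_ + _).
  by apply: eq_bigr => e /andP [_ /negbTE ->].
rewrite mul0n addn0; apply: eq_bigr => e /andP [_ ve].
rewrite /addw; case: eqP => // ea; by move: va; rewrite -ea ve.
Qed.

Lemma hdeg0 v : hdeg E (fun _ => 0) v = 0.
Proof. by rewrite /hdeg big1. Qed.

Definition supp_ok (W : {set 'I_n}) (h : {set 'I_n} -> nat) :=
  forall e, h e != 0 -> (e \in E) && (e \subset W).

Definition RE (W : {set 'I_n}) h :=
  [/\ supp_ok W h, (forall e, h e <= k) & forall v, hdeg E h v = (v \in W) * k].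

Definition RO (W : {set 'I_n}) h :=
  [/\ supp_ok W h, (forall e, h e <= k) &
   exists2 v', v' \in W & forall v, hdeg E h v = (v \in W) * k - (v == v')].

Lemma memW' (W : {set 'I_n}) u v w :
  (w \in W :\ u :\ v) = (w \notin [set u; v]) && (w \in W).
Proof. by rewrite !inE negb_or andbA [X in X && _]andbC. Qed.

Lemma step_supp (W : {set 'I_n}) u v h :
  u \in W -> v \in W -> u != v -> [set u; v] \notin F ->
  supp_ok (W :\ u :\ v) h -> (forall e, h e <= k) ->
  [/\ supp_ok W (addw h [set u; v] k), (forall e, addw h [set u; v] k e <= k),
      [set u; v] \in E & h [set u; v] = 0].
Proof.
move=> uW vW uv uvF hs hb; split.
- move=> e; rewrite /addw; case: (eqVneq e [set u; v]) => [-> _|_ /hs /andP [-> sW]].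
    rewrite memE //=; by apply/subsetP => x /set2P [] ->.
  apply/subsetP => x /(subsetP sW); rewrite !inE; by case/and3P.
- by move=> e; rewrite /addw; case: (e == _).
- exact: memE.
- apply/eqP; apply: contraT => /hs /andP [_ /subsetP /(_ u (set21 _ _))].
  by rewrite !inE eqxx andbF.
Qed.

Lemma stepE (W : {set 'I_n}) u v h :
  u \in W -> v \in W -> u != v -> [set u; v] \notin F ->
  RE (W :\ u :\ v) h -> RE W (addw h [set u; v] k).
Proof.
move=> uW vW uv uvF [hs hb hd].
have [s1 s2 s3 s4] := step_supp uW vW uv uvF hs hb.
split => // w; rewrite hdeg_add // hd memW'.
case wuv: (w \in [set u; v]) => /=.
  have -> : w \in W by move: wuv => /set2P [] ->.

  by rewrite mul0n add0n.
by rewrite mul0n addn0.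
Qed.

Lemma stepO (W : {set 'I_n}) u v h :
  u \in W -> v \in W -> u != v -> [set u; v] \notin F ->
  RO (W :\ u :\ v) h -> RO W (addw h [set u; v] k).
Proof.
move=> uW vW uv uvF [hs hb [v' v'W hd]].
have [s1 s2 s3 s4] := step_supp uW vW uv uvF hs hb.
split => //; exists v'.
  by move: v'W; rewrite !inE; case/and3P.
move=> w; rewrite hdeg_add // hd memW'.
case wuv: (w \in [set u; v]) => /=.
  have : w != v'.
    apply: contraTN v'W => /eqP <-; by rewrite memW' wuv.
  move/negbTE -> => /=; rewrite add0n mul1n.
  move: wuv; rewrite !inE => /orP [] /eqP ->; by rewrite ?uW ?vW mul1n subn0.
by rewrite mul0n addn0.
Qed.


Lemma pairFW (W : {set 'I_n}) x y : x \in W -> y \in W -> [set x; y] \in F -> 0 < #|FW W|.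
Proof.
move=> xW yW xyF; rewrite card_gt0; apply/set0Pn; exists [set x; y].
by rewrite FWP xyF; apply/subsetP => z /set2P [] ->.
Qed.

Lemma triO (W : {set 'I_n}) : odd k -> #|W| = 3 -> #|FW W| = 0 -> exists h, RO W h.
Proof.
move=> ok h3 h0.
have : 0 < #|W| by rewrite h3.
rewrite card_gt0 => /set0Pn [a aW].
have : 0 < #|W :\ a| by move: h3; rewrite (cardsD1 a W) aW /= add1n => -[->].
rewrite card_gt0 => /set0Pn [b]; rewrite in_setD1 => /andP [ba bW].
have : 0 < #|W :\ a :\ b|.
  move: h3; rewrite (cardsD1 a W) aW (cardsD1 b (W :\ a)) in_setD1 ba bW.
  by rewrite /= !add1n => -[->].
rewrite card_gt0 => /set0Pn [c]; rewrite !in_setD1 => /and3P [cb ca cW].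
have ab : a != b by rewrite eq_sym.
have ac : a != c by rewrite eq_sym.
have bc : b != c by rewrite eq_sym.
have eW : W = [set a; b; c].
  apply/eqP; rewrite eq_sym eqEcard h3 cards3 //; first last.
  by rewrite andbT; apply/subsetP => x; rewrite !inE -!orbA => /or3P [] /eqP ->.
have nF x y : x \in W -> y \in W -> [set x; y] \notin F.
  by move=> xW yW; apply/negP => /(pairFW xW yW); rewrite h0.
have abF := nF _ _ aW bW; have acF := nF _ _ aW cW; have bcF := nF _ _ bW cW.
set j := k./2.
have kj : k = j + j + 1.
  by rewrite -[LHS](odd_double_half k) ok /j -addnn addnC.
clearbody j.
set h0' : {set 'I_n} -> nat := fun _ => 0.
set h1 := addw h0' [set a; b] j.
set h2 := addw h1 [set a; c] j.
set h3' := addw h2 [set b; c] j.+1.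
have ne1 : ([set a; c] == [set a; b]) = false.
  apply/negbTE; apply/negP => /eqP e; have : c \in [set a; b] by rewrite -e set22.
  by rewrite !inE (negbTE ca) (negbTE cb).
have ne2 : ([set b; c] == [set a; b]) = false.
  apply/negbTE; apply/negP => /eqP e; have : c \in [set a; b] by rewrite -e set22.
  by rewrite !inE (negbTE ca) (negbTE cb).
have ne3 : ([set b; c] == [set a; c]) = false.
  apply/negbTE; apply/negP => /eqP e; have : b \in [set a; c] by rewrite -e set21.
  by rewrite !inE (negbTE ba) eq_sym (negbTE cb).
exists h3'; split.
- move=> e; rewrite /h3' /h2 /h1 /addw /h0'.
  have sW x y : x \in W -> y \in W -> [set x; y] \subset W.
    by move=> xW yW; apply/subsetP => z /set2P [] ->.
  case: (eqVneq e [set b; c]) => [-> _|_]; first by rewrite memE ?sW.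
  case: (eqVneq e [set a; c]) => [-> _|_]; first by rewrite memE ?sW.
  case: (eqVneq e [set a; b]) => [-> _|_]; first by rewrite memE ?sW.
  by rewrite eqxx.
- move=> e; rewrite /h3' /h2 /h1 /addw /h0'.
  rewrite kj; case: ifP => _; first plia.
  case: ifP => _; first plia.
  case: ifP => _; plia.
- exists a => // w.
  rewrite /h3' hdeg_add ?memE //; last by rewrite /h2 /h1 /addw ne2 ne3.
  rewrite /h2 hdeg_add ?memE //; last by rewrite /h1 /addw ne1.
  rewrite /h1 hdeg_add ?memE // /h0' hdeg0 add0n eW kj.
  case: (eqVneq w a) => [->|wa].
    by rewrite !inE !eqxx (negbTE ab) (negbTE ac) /=; plia.
  case: (eqVneq w b) => [->|wb].
    by rewrite !inE !eqxx eq_sym (negbTE ab) (negbTE bc) /=; plia.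
  case: (eqVneq w c) => [->|wc].
    by rewrite !inE !eqxx eq_sym (negbTE ac) eq_sym (negbTE bc) /=; plia.
  by rewrite !inE (negbTE wa) (negbTE wb) (negbTE wc).
Qed.


Lemma cardW2 (W : {set 'I_n}) u v : u \in W -> v \in W -> u != v ->
  #|W :\ u :\ v| + 2 = #|W|.
Proof.
move=> uW vW uv.
rewrite [in RHS](cardsD1 u W) uW (cardsD1 v (W :\ u)) in_setD1 vW eq_sym uv /=.
by rewrite !add1n addn2.
Qed.

Lemma EV j (W : {set 'I_n}) : #|W| = 2 * j ->
  (#|W| = 0 \/ #|FW W| + 2 <= #|W|) -> exists h, RE W h.
Proof.
elim: j W => [|j IH] W hW hc.
  have W0 : W = set0 by apply/cards0_eq; rewrite hW.
  exists (fun _ => 0); split; [by move=> e | by [] | ].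
  by move=> v; rewrite hdeg0 W0 inE.
have hc' : #|FW W| + 2 <= #|W|.
  by case: hc => // h0; move: hW; rewrite h0; plia.
have [u [v [uW vW uv uvF hf]]] := PL hc'.
have c2 := cardW2 uW vW uv.
have [h hh] : exists h, RE (W :\ u :\ v) h.
  apply: IH.
    move: c2 hW; set c := #|W :\ u :\ v|; set d := #|W|; plia.
  move: c2 hW hf hc'; set c := #|W :\ u :\ v|; set d := #|W|.
  set f := #|FW W|; set f' := #|FW (W :\ u :\ v)|; plia.
by exists (addw h [set u; v] k); apply: stepE.
Qed.

Lemma OD j (W : {set 'I_n}) : odd k -> #|W| = 2 * j + 3 -> #|FW W| + 2 <= #|W| ->
  (7 <= #|W| \/ #|FW W| + 3 <= #|W|) -> exists h, RO W h.
Proof.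
move=> ok; elim: j W => [|j IH] W hW hc hc3.
  apply: triO => //; move: hc3 hW; set f := #|FW W|; set d := #|W|; plia.
have [hs|hn] : (#|W| = 7 /\ #|FW W| = 5) \/ ~ (#|W| = 7 /\ #|FW W| = 5).
  by case: (#|W| == 7) / eqP; case: (#|FW W| == 5) / eqP; tauto.
  have [u [v [uW vW uv uvF hf]]] := PL7 hs.1 hs.2.
  have c2 := cardW2 uW vW uv.
  have [h hh] : exists h, RO (W :\ u :\ v) h.
    case: hs => h7 h5.
    apply: IH.
    - move: c2 hW; set c := #|W :\ u :\ v|; set d := #|W|; plia.
    - move: c2 hf; rewrite h7 h5; set c := #|W :\ u :\ v|; set f' := #|FW (W :\ u :\ v)|; plia.
    - move: c2 hf; rewrite h7 h5; set c := #|W :\ u :\ v|; set f' := #|FW (W :\ u :\ v)|; plia.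
  by exists (addw h [set u; v] k); apply: stepO.
have [u [v [uW vW uv uvF hf]]] := PL hc.
have c2 := cardW2 uW vW uv.
have [h hh] : exists h, RO (W :\ u :\ v) h.
  apply: IH;
  move: c2 hW hf hc hc3 hn; set c := #|W :\ u :\ v|; set d := #|W|;
  set f := #|FW W|; set f' := #|FW (W :\ u :\ v)|; plia.
by exists (addw h [set u; v] k); apply: stepO.
Qed.


Lemma RE_perfect h : RE setT h -> perfect_int_kmatching E k h.
Proof.
move=> [hs hb hd]; split; last by move=> v; rewrite hd inE mul1n.
split; last by split => // v; rewrite hd inE mul1n.
by move=> e eE; apply/eqP; apply: contraT => /hs /andP [eE' _]; rewrite eE' in eE.
Qed.

Lemma RO_almost h : RO setT h -> almost_perfect_int_kmatching E k h.
Proof.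
move=> [hs hb [v' _ hd]]; split.
  split; last by split => // v; rewrite hd inE mul1n leq_subr.
  by move=> e eE; apply/eqP; apply: contraT => /hs /andP [eE' _]; rewrite eE' in eE.
exists v'; split; first by rewrite hd inE mul1n eqxx subn1.
by move=> v /negbTE vv; rewrite hd inE mul1n vv subn0.
Qed.

End Main.

Lemma dbl n (E : {set {set 'I_n}}) (h : {set 'I_n} -> nat) (A : {set 'I_n}) :
  \sum_(v in A) hdeg E h v = \sum_(e in E) h e * #|e :&: A|.
Proof.
rewrite /hdeg (exchange_big_dep (fun e => e \in E)) /=; last by move=> v e _ /andP [].
apply: eq_bigr => e eE.
rewrite (eq_bigl (fun v => v \in e :&: A)); last first.
  by move=> v; rewrite !inE eE /= andbC.
by rewrite sum_nat_const mulnC.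
Qed.

Lemma kill n (F : {set {set 'I_n}}) k (S : {set 'I_n}) h v' :
  2 <= k -> #|~: S| + 1 = #|S| ->
  (forall e, e \in edges_del (complete_graph n) F -> #|e :&: S| <= #|e :&: ~: S|) ->
  (forall v, hdeg (edges_del (complete_graph n) F) h v <= k) ->
  (forall v, k <= hdeg (edges_del (complete_graph n) F) h v + (v == v')) -> False.
Proof.
set E := edges_del _ F => k2 cS hS hb hl.
have h1 : \sum_(v in S) hdeg E h v <= \sum_(v in ~: S) hdeg E h v.
  by rewrite !dbl; apply: leq_sum => e eE; rewrite leq_mul2l hS ?orbT.
have h2 : \sum_(v in ~: S) hdeg E h v <= #|~: S| * k.
  by rewrite -sum_nat_const; apply: leq_sum => v _.
have h3 : #|S| * k <= \sum_(v in S) hdeg E h v + 1.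
  rewrite -sum_nat_const.
  apply: (@leq_trans (\sum_(v in S) (hdeg E h v + (v == v')))).
    by apply: leq_sum => v _.
  rewrite big_split /= leq_add2l.
  case: (boolP (v' \in S)) => hv.
    rewrite (bigD1 v') //= eqxx big1 // => v /andP [_ /negbTE ->] //.
  rewrite big1 // => v vS; case: eqP => // ev; by move: hv; rewrite -ev vS.
move: h1 h2 h3 cS k2.
set a := \sum_(v in S) hdeg E h v; set b := \sum_(v in ~: S) hdeg E h v.
set c := #|~: S|; set d := #|S|. nia.
Qed.

Lemma is_edgeP n (e : {set 'I_n}) :
  is_edge (complete_graph n) e -> exists x y, x != y /\ e = [set x; y].
Proof.
by move=> /existsP [x /existsP [y /andP [xy /eqP ->]]]; exists x, y.
Qed.

Lemma killPA n (F : {set {set 'I_n}}) k (S : {set 'I_n}) (v0 : 'I_n) :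
  3 <= k -> #|~: S| + 1 = #|S| ->
  (forall e, e \in edges_del (complete_graph n) F -> #|e :&: S| <= #|e :&: ~: S|) ->
  ~ (exists h, perfect_int_kmatching (edges_del (complete_graph n) F) k h) /\
  ~ (exists h, almost_perfect_int_kmatching (edges_del (complete_graph n) F) k h).
Proof.
move=> k3 cS hS; have k2 : 2 <= k by apply: ltnW.
split.
  move=> [h [[_ [_ hb]] hd]]; apply: (kill (v' := v0) k2 cS hS hb).
  by move=> v; rewrite hd leq_addr.
move=> [h [[_ [_ hb]] [v' [h1 h2]]]]; apply: (kill (v' := v') k2 cS hS hb).
move=> v; case: (eqVneq v v') => [->|ne].
  by rewrite h1 addn1 prednK // (leq_trans _ k3).
by rewrite h2 // addn0.
Qed.

Lemma star n k (x0 : 'I_n) : 3 <= k ->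
  int_kmp_set (complete_graph n) k [set [set x0; y] | y in [set~ x0]] /\
  #|[set [set x0; y] | y in [set~ x0]]| = n - 1.
Proof.
move=> k3; set F := [set [set x0; y] | y in [set~ x0]].
have z : forall h, hdeg (edges_del (complete_graph n) F) h x0 = 0.
  move=> h; rewrite /hdeg big_pred0 // => e; apply/negbTE/negP => /andP [eE xe].
  move: eE; rewrite inE => /andP [/is_edgeP [x [y [xy ee]]] eF].
  apply: (negP eF); move: xe; rewrite ee => /set2P [] ex.
    by subst x; rewrite /F; apply/imsetP; exists y => //; rewrite !inE eq_sym.
  by subst y; rewrite /F setUC; apply/imsetP; exists x => //; rewrite !inE.
split; last first.
  rewrite card_in_imset; first by rewrite cardsC1 card_ord subn1.
  move=> v w; rewrite !inE => va wa eq.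
  have : v \in [set x0; w] by rewrite -eq set22.
  by rewrite !inE (negbTE va) /= => /eqP.
split.
  move=> e /imsetP [y]; rewrite !inE => yx ->.
  by apply/existsP; exists x0; apply/existsP; exists y; rewrite /= eq_sym yx eqxx.
split.
  move=> [h [_ hd]]; have := hd x0; rewrite z => k0; move: k3; by rewrite -k0.
move=> [h [_ [v' [h1 h2]]]].
case: (eqVneq x0 v') => [e|ne].
  by move: h1; rewrite -e z; move: k3; case: (k) => [|[|[|kk]]].
by move: (h2 _ ne); rewrite z => k0; move: k3; rewrite -k0.
Qed.


Lemma edge_bound n (e S : {set 'I_n}) :
  is_edge (complete_graph n) e -> ~~ (e \subset S) -> #|e :&: S| <= #|e :&: ~: S|.
Proof.
move=> /is_edgeP [x [y [xy ee]]] nS.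
have c2 : #|e| = 2 by rewrite ee cards2 xy.
have := cardsID S e; rewrite setDE c2.
have : #|e :&: S| < #|e|.
  apply: proper_card; rewrite properEneq subsetIl andbT.
  by apply: contraNN nS => /eqP <-; apply: subsetIr.
rewrite c2; set p := #|e :&: S|; set q := #|e :&: ~: S|; plia.
Qed.

Lemma pair_ne n (a b c : 'I_n) : a != c -> b != c -> [set a; b] != [set a; c].
Proof.
move=> ac bc; apply/eqP => e; have := set22 a c; rewrite -e !inE.
by rewrite eq_sym (negbTE ac) eq_sym (negbTE bc).
Qed.

Lemma fromE n (F : {set {set 'I_n}}) e :
  e \in edges_del (complete_graph n) F -> is_edge (complete_graph n) e /\ e \notin F.
Proof. by rewrite inE => /andP []. Qed.

Lemma edge_ab n (a b : 'I_n) : a != b -> is_edge (complete_graph n) [set a; b].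
Proof. by move=> ab; apply/existsP; exists a; apply/existsP; exists b; rewrite /= ab eqxx. Qed.

Lemma five n k (a b c : 'I_n) : n = 5 -> a != b -> a != c -> b != c -> 3 <= k ->
  int_kmp_set (complete_graph n) k [set [set a; b]; [set a; c]; [set b; c]] /\
  #|[set [set a; b]; [set a; c]; [set b; c]]| = n - 2.
Proof.
move=> n5 ab ac bc k3; set F := [set [set a; b]; [set a; c]; [set b; c]].
have bc' : b != c by [].
split; last first.
  have -> : n - 2 = 3 by rewrite n5.
  apply: cards3.
  - exact: pair_ne.
  - by rewrite [[set a; b]]setUC pair_ne.
  - by rewrite [[set a; c]]setUC [[set b; c]]setUC pair_ne // eq_sym.
split.
  move=> e /setUP [/set2P [] -> | /set1P ->]; exact: edge_ab.
set S := [set a; b; c].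
apply: (killPA (S := S) a k3).
  have := cardsC S; rewrite card_ord cards3 //; move: n5; set q := #|~: S|; plia.
move=> e /fromE [ie eF]; apply: edge_bound => //.
apply: contraNN eF => eS.
have [x [y [xy ee]]] := is_edgeP ie.
have : x \in S by apply: (subsetP eS); rewrite ee set21.
have : y \in S by apply: (subsetP eS); rewrite ee set22.
rewrite ee /F /S => /setUP [/set2P [] | /set1P] yv /setUP [/set2P [] | /set1P] xv; subst x y;
  rewrite ?eqxx // in xy;
  first [ by apply/setUP; left; apply/set2P; left
        | by apply/setUP; left; apply/set2P; right
        | by apply/setUP; right; apply/set1P
        | rewrite setUC;
          first [ by apply/setUP; left; apply/set2P; left
                | by apply/setUP; left; apply/set2P; right
                | by apply/setUP; right; apply/set1P ] ].
Qed.

Lemma three n k (a b : 'I_n) : n = 3 -> a != b -> 3 <= k ->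
  int_kmp_set (complete_graph n) k [set [set a; b]] /\ #|[set [set a; b]]| = n - 2.
Proof.
move=> n3 ab k3; split; last by rewrite cards1 n3.
split.
  by move=> e /set1P ->; exact: edge_ab.
set S := [set a; b].
apply: (killPA (S := S) a k3).
  have := cardsC S; rewrite card_ord cards2 ab; move: n3; set q := #|~: S|; plia.
move=> e /fromE [ie eF]; apply: edge_bound => //.
apply: contraNN eF => eS.
have [x [y [xy ee]]] := is_edgeP ie.
have : x \in S by apply: (subsetP eS); rewrite ee set21.
have : y \in S by apply: (subsetP eS); rewrite ee set22.
rewrite ee /S => /set2P [] yv /set2P [] xv; subst x y; rewrite ?eqxx // in xy.
  by rewrite setUC set11.
by rewrite set11.
Qed.

Theorem theorem3p7 (k n : nat) :
  3 <= k -> odd k -> 2 <= n ->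
  mpk_eq (complete_graph n) k
    (if (n == 3) || (n == 5) then n - 2 else n - 1).
Proof.
move=> k3 ok n2; split.
  case: ifP => hn.
    case/orP: hn => /eqP ?; subst n.
      by eexists; apply: (@three 3 k (@Ordinal 3 0 isT) (@Ordinal 3 1 isT)).
    by eexists; apply: (@five 5 k (@Ordinal 5 0 isT) (@Ordinal 5 1 isT) (@Ordinal 5 2 isT)).
  have [hs hc] := star (Ordinal (leq_trans (isT : 0 < 2) n2)) k3.
  by exists [set [set Ordinal (leq_trans (isT : 0 < 2) n2); y] | y in [set~ Ordinal (leq_trans (isT : 0 < 2) n2)]].
move=> F [hE [nP nA]]; rewrite leqNgt; apply/negP => hlt.
have hF : forall e, e \in F -> exists x y, x != y /\ e = [set x; y].
  by move=> e /hE /is_edgeP.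
have FWT : #|FW F setT| = #|F|.
  suff -> : FW F setT = F by [].
  by apply/setP => e; rewrite FWP subsetT andbT.
have cT : #|[set: 'I_n]| = n by rewrite cardsT card_ord.
have nd := odd_double_half n.
set q := n./2 in nd.
move: hlt; case: ifP => hn hlt.
  have hn' : n = 3 \/ n = 5 by case/orP: hn => /eqP; [left|right].
  have on : odd n by case: hn' => ->.
  have {}nd : n = 2 * q + 1 by rewrite -nd on mul2n addnC.
  clearbody q.
  have [h hh] : exists h, RO F k setT h.
    apply: (@OD n F hF k (q - 1) setT ok).
    - rewrite cT; move: nd n2; plia.
    - rewrite cT FWT; move: hlt hn' nd; plia.
    - right; rewrite cT FWT; move: hlt hn' nd; plia.
  by apply: nA; exists h; apply: RO_almost.
have hn' : n <> 3 /\ n <> 5 by move/norP: hn => [/eqP ? /eqP ?].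
case: (boolP (odd n)) => on.
  have {}nd : n = 2 * q + 1 by rewrite -nd on mul2n addnC.
  clearbody q.
  have [h hh] : exists h, RO F k setT h.
    apply: (@OD n F hF k (q - 1) setT ok).
    - rewrite cT; move: nd n2; plia.
    - rewrite cT FWT; move: hlt nd; plia.
    - left; rewrite cT; move: hn' nd n2; plia.
  by apply: nA; exists h; apply: RO_almost.
have {}nd : n = 2 * q by rewrite -nd (negbTE on) mul2n.
clearbody q.
have [h hh] : exists h, RE F k setT h.
  apply: (@EV n F hF k q setT).
  - by rewrite cT nd.
  - right; rewrite cT FWT; move: hlt hn' nd n2; plia.
by apply: nP; exists h; apply: RE_perfect.
Qed.
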